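(* Let $n,k$ be positive integers with $k<n/2$. For any deterministic algorithm, adaptive or non-adaptive, that uses interventions of size at most $k$ and fully orients $\vec{K}_n(\sigma)$ for every total ordering $\sigma$ of $[1:n]$ (in the learning model of the context), there exists $\sigma$ for which the set of interventions $\mathcal{I}$ it uses satisfies $\frac{n}{k}\log_{\frac{ne}{k}} n \le |\mathcal{I}|$. Moreover, there exists a family $\mathcal{I}$ of subsets of $[1:n]$, each of size at most $k$, with $|\mathcal{I}| \le (\lceil n/k \rceil - 1)\lceil \log_{\lceil n/k\rceil} n\rceil$, which fully orients $\vec{K}_n(\sigma)$ for every $\sigma$.
   Context: For a total ordering $\sigma$ of $V=[1:n]$, $\vec{K}_n(\sigma)$ is the DAG on the complete graph $K_n$ in which each edge is directed from the earlier to the later vertex in $\sigma$. Learning model: the learner maintains a partially directed graph, initially the undirected $K_n$. Performing an intervention on $I\subseteq V$: (R0) every edge with exactly one endpoint in $I$ becomes oriented as in the true DAG; then the Meek rules are applied repeatedly until nothing more can be oriented: (R1) orient $a-b$ as $a\to b$ if there is $c$ with $c\to a$ and $c,b$ non-adjacent; (R2) orient $a-b$ as $a\to b$ if there is $c$ with $a\to c$, $c\to b$; (R3) orient $a-b$ as $a\to b$ if there are $c,d$ with $a-c$, $a-d$, $c\to b$, $d\to b$, $c,d$ non-adjacent; (R4) orient $a-c$ as $a\to c$ if there are $b,d$ with $b\to c$, $a-d$, $a-b$, $d\to b$, $c,d$ non-adjacent. A non-adaptive algorithm fixes $\mathcal{I}$ in advance; an adaptive deterministic algorithm chooses $I_{m+1}$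 as a deterministic function of the partially directed graph after $I_1,\ldots,I_m$. ''Fully orients'' means that after all interventions in $\mathcal{I}$ all edges are oriented. *)

(* Defs.v *)
From mathcomp Require Import all_boot all_fingroup.
From Stdlib Require Import Reals.

Set Implicit Arguments.
Unset Strict Implicit.
Unset Printing Implicit Defensive.

(* Vertices are 'I_n = {0,...,n-1} (standing for [1:n]).
   A total ordering sigma is a permutation: sigma v is the position of v.
   u is earlier than v iff sigma u < sigma v. *)
Definition before (n : nat) (sigma : {perm 'I_n}) (u v : 'I_n) : bool :=
  (sigma u < sigma v)%N.

(* A partially directed graph on a fixed skeleton (adjacency relation adj)
   is represented by the set X of oriented edges: (a,b) \in X means a -> b. *)
Section Meek.
Variable n : nat.
Variable adj : rel 'I_n.
Implicit Types X : {set 'I_n * 'I_n}.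

Definition nonadj (x y : 'I_n) : bool := (x != y) && ~~ adj x y.

Definition undirected X (a b : 'I_n) : bool :=
  [&& adj a b, (a, b) \notin X & (b, a) \notin X].

Definition R1 X (a b : 'I_n) : bool :=
  undirected X a b && [exists c, ((c, a) \in X) && nonadj c b].
Definition R2 X (a b : 'I_n) : bool :=
  undirected X a b && [exists c, ((a, c) \in X) && ((c, b) \in X)].
Definition R3 X (a b : 'I_n) : bool :=
  undirected X a b &&
  [exists c, exists d, [&& undirected X a c, undirected X a d,
                          (c, b) \in X, (d, b) \in X & nonadj c d]].
Definition R4 X (a c : 'I_n) : bool :=
  undirected X a c &&
  [exists b, exists d, [&& (b, c) \in X, undirected X a d,
                          undirected X a b, (d, b) \in X & nonadj c d]].

Definition meek_step X : {set 'I_n * 'I_n} :=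
  X :|: [set p | [|| R1 X p.1 p.2, R2 X p.1 p.2, R3 X p.1 p.2 | R4 X p.1 p.2]].

(* apply the rules repeatedly until nothing more can be oriented: the chain
   X, meek_step X, ... is increasing in a finite set, hence stationary after
   at most #|'I_n * 'I_n| rounds. *)
Definition meek_closure X : {set 'I_n * 'I_n} :=
  iter #|{: 'I_n * 'I_n}| meek_step X.
End Meek.

Definition Kn_adj (n : nat) : rel 'I_n := fun x y => x != y.

Definition R0 (n : nat) (sigma : {perm 'I_n}) (I : {set 'I_n}) : {set 'I_n * 'I_n} :=
  [set p | ((p.1 \in I) != (p.2 \in I)) && before sigma p.1 p.2].

Definition intervene (n : nat) (sigma : {perm 'I_n}) (X : {set 'I_n * 'I_n})
    (I : {set 'I_n}) : {set 'I_n * 'I_n} :=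
  meek_closure (@Kn_adj n) (X :|: R0 sigma I).

Definition fully_oriented (n : nat) (X : {set 'I_n * 'I_n}) : bool :=
  [forall a : 'I_n, forall b : 'I_n, (a != b) ==> ((a, b) \in X) || ((b, a) \in X)].

Definition nonadaptive_state (n : nat) (sigma : {perm 'I_n}) (s : seq {set 'I_n})
  : {set 'I_n * 'I_n} := foldl (intervene sigma) set0 s.

(* adaptive deterministic algorithm: next intervention is a function of the
   current partially directed graph *)
Fixpoint adaptive_state (n : nat) (alg : {set 'I_n * 'I_n} -> {set 'I_n})
    (sigma : {perm 'I_n}) (m : nat) : {set 'I_n * 'I_n} :=
  match m with
  | 0 => set0
  | m'.+1 => let X := adaptive_state alg sigma m' in intervene sigma X (alg X)
  end.

Definition adaptive_used (n : nat) (alg : {set 'I_n * 'I_n} -> {set 'I_n})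
    (sigma : {perm 'I_n}) (m : nat) : seq {set 'I_n} :=
  [seq alg (adaptive_state alg sigma i) | i <- iota 0 m].

Definition lower_bound (n k : nat) : R :=
  Rmult (Rdiv (INR n) (INR k)) (Rdiv (ln (INR n)) (ln (Rdiv (Rmult (INR n) (exp 1)) (INR k)))).

Definition ceil_div (n k : nat) : nat := (n + k.-1) %/ k.

Definition upper_bound (n k : nat) : nat :=
  (ceil_div n k).-1 * up_log (ceil_div n k) n.

(* Main.v *)
Require Import Defs.
From mathcomp Require Import all_boot all_fingroup.
From Stdlib Require Import Reals.
From Stdlib Require Import Lra Classical.
From mathcomp Require Import zify.

Set Implicit Arguments.
Unset Strict Implicit.
Unset Printing Implicit Defensive.


Section OX.
Variable n : nat.
Implicit Types (sigma : {perm 'I_n}) (s : seq {set 'I_n}).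

Definition sep s (a c : 'I_n) : bool := has (fun I : {set 'I_n} => (a \in I) != (c \in I)) s.

Definition OX sigma s : {set 'I_n * 'I_n} :=
  [set p | before sigma p.1 p.2 &&
     [exists c, [&& (sigma p.1 <= sigma c)%N, (sigma c <= sigma p.2)%N & sep s p.1 c]]].

Lemma sep_sym s a b : sep s a b = sep s b a.
Proof. by apply: eq_has => I /=; rewrite eq_sym. Qed.

Lemma sep_rcons s I a b : sep (rcons s I) a b = sep s a b || ((a \in I) != (b \in I)).
Proof. by rewrite /sep has_rcons orbC. Qed.

Lemma sep_refl s a : sep s a a = false.
Proof. by apply/hasP => -[I _]; rewrite eqxx. Qed.

Lemma sep_trans s a b c : sep s a c -> ~~ sep s a b -> sep s c b.
Proof.
move=> /hasP [I HI Hac] /hasP Hab; apply/hasP; exists I => //.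
case: (boolP ((a \in I) != (b \in I))) => H; first by case: Hab; exists I.
by move: H Hac; case: (a \in I); case: (b \in I); case: (c \in I).
Qed.

Lemma OX_before sigma s p : p \in OX sigma s -> before sigma p.1 p.2.
Proof. by rewrite inE => /andP[]. Qed.

Lemma sep_OX sigma s a b : before sigma a b -> sep s a b -> (a, b) \in OX sigma s.
Proof.
move=> Hb Hs; rewrite inE /= Hb /=; apply/existsP; exists b.
by rewrite leqnn Hs andbT ltnW.
Qed.

Lemma nonadj_Kn (x y : 'I_n) : nonadj (@Kn_adj n) x y = false.
Proof. by rewrite /nonadj /Kn_adj; case: (x != y). Qed.

Lemma before_inj sigma a c : (sigma a <= sigma c)%N -> a != c -> before sigma a c.
Proof.
move=> H Hne; rewrite /before ltn_neqAle H andbT.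
apply: contra Hne => /eqP E; apply/eqP; apply: (perm_inj (s := sigma)); exact: val_inj.
Qed.

Section Step.
Variables (sigma : {perm 'I_n}) (s : seq {set 'I_n}) (I : {set 'I_n}).
Let Y := OX sigma s :|: Defs.R0 sigma I.
Let Z := OX sigma (rcons s I).

Lemma Y_sub_Z : Y \subset Z.
Proof.
apply/subsetP => -[a b]; rewrite inE => /orP[].
  rewrite !inE /= => /andP[-> /existsP[c /and3P[H1 H2 H3]]] /=.
  by apply/existsP; exists c; rewrite H1 H2 sep_rcons H3.
rewrite !inE /= => /andP[Hab Hb]; rewrite Hb /=; apply/existsP; exists b.
by rewrite leqnn ltnW // sep_rcons Hab orbT.
Qed.

Lemma step_sub (X : {set 'I_n * 'I_n}) : X \subset Z -> meek_step (@Kn_adj n) X \subset Z.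
Proof.
move=> HX; apply/subsetP => -[a b]; rewrite inE => /orP[]; first by move/(subsetP HX).
rewrite inE /= /Defs.R1 /R3 /R4 /R2.
have nf : forall (x y : 'I_n), nonadj (@Kn_adj n) x y = false by move=> x y; exact: nonadj_Kn.
case/or4P.
- by move=> /andP[_ /existsP[c]]; rewrite nf andbF.
- move=> /andP[_ /existsP[c /andP[/(subsetP HX) Hac /(subsetP HX) Hcb]]].
  move: Hac Hcb; rewrite !inE /= => /andP[Bac /existsP[c' /and3P[H1 H2 H3]]] /andP[Bcb _].
  rewrite /before in Bac Bcb *; rewrite (ltn_trans Bac Bcb) /=.
  apply/existsP; exists c'; rewrite H1 H3 /= (leq_trans H2) //.
  exact: ltnW.
- by move=> /andP[_ /existsP[c /existsP[d /and5P[_ _ _ _]]]]; rewrite nf.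
- by move=> /andP[_ /existsP[c /existsP[d /and5P[_ _ _ _]]]]; rewrite nf.
Qed.

Lemma step_eq (X : {set 'I_n * 'I_n}) : Y \subset X -> X \subset Z -> meek_step (@Kn_adj n) X = Z.
Proof.
move=> HY HX; apply/eqP; rewrite eqEsubset step_sub //=.
apply/subsetP => -[a b] HZ.
case: (boolP ((a, b) \in X)) => Hx; first by rewrite inE Hx.
rewrite inE; apply/orP; right; rewrite inE /=.
have Hsep : forall x y, before sigma x y -> sep (rcons s I) x y -> (x, y) \in X.
  move=> x y Bxy; rewrite sep_rcons => /orP[] H; apply: (subsetP HY); rewrite inE.
    by rewrite sep_OX.
  by rewrite orbC inE /= H Bxy.
move: (HZ); rewrite inE /= => /andP[Bab /existsP[c /and3P[H1 H2 H3]]].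
have Nab : ~~ sep (rcons s I) a b by apply: contra Hx; apply: Hsep.
have Hcb := sep_trans H3 Nab.
have nac : a != c by apply: contraTneq H3 => ->; rewrite sep_refl.
have ncb : c != b by apply: contraTneq Hcb => ->; rewrite sep_refl.
have Xac : (a, c) \in X by apply: Hsep => //; exact: before_inj.
have Xcb : (c, b) \in X by apply: Hsep => //; exact: before_inj.
apply/orP; right; apply/orP; left.
rewrite /R2 /undirected /Kn_adj /=; apply/andP; split; last first.
  by apply/existsP; exists c; rewrite Xac Xcb.
rewrite Hx /=; apply/andP; split.
  by apply: contraTneq Bab => ->; rewrite /before ltnn.
apply: contraL Bab => /(subsetP HX) /OX_before; rewrite /before /= => H.
by rewrite -leqNgt ltnW.
Qed.

Lemma iter_step N : (0 < N)%N -> iter N (meek_step (@Kn_adj n)) Y = Z.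
Proof.
have H : forall N, Y \subset iter N (meek_step (@Kn_adj n)) Y /\
                   iter N (meek_step (@Kn_adj n)) Y \subset Z.
  elim=> [|m [IH1 IH2]] /=; first by rewrite subxx Y_sub_Z.
  rewrite step_eq // subxx; split => //; exact: Y_sub_Z.
case: N => // N _ /=; case: (H N) => H1 H2; exact: step_eq.
Qed.
End Step.

Lemma intervene_OX sigma s I : (0 < n)%N ->
  intervene sigma (OX sigma s) I = OX sigma (rcons s I).
Proof.
move=> n0; rewrite /intervene /meek_closure; apply: iter_step.
by rewrite card_prod card_ord muln_gt0 n0.
Qed.

Lemma OX_nil sigma : OX sigma [::] = set0.
Proof.
apply/setP => p; rewrite !inE; apply/negbTE; apply/nandP; right.
by apply/existsP => -[c /and3P[]].
Qed.

Lemma nonadaptive_OX sigma s : (0 < n)%N -> nonadaptive_state sigma s = OX sigma s.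
Proof.
move=> n0; rewrite /nonadaptive_state; elim/last_ind: s => [|s I IH] /=.
  by rewrite OX_nil.
by rewrite foldl_rcons IH intervene_OX.
Qed.

Lemma used_S alg sigma m : adaptive_used alg sigma m.+1 =
  rcons (adaptive_used alg sigma m) (alg (adaptive_state alg sigma m)).
Proof. by rewrite /adaptive_used -addn1 iotaD map_cat cats1. Qed.

Lemma adaptive_OX alg sigma m : (0 < n)%N ->
  adaptive_state alg sigma m = OX sigma (adaptive_used alg sigma m).
Proof.
move=> n0; elim: m => [|m IH] /=; first by rewrite OX_nil.
by rewrite used_S -intervene_OX // -IH.
Qed.

Lemma full_of_sep sigma s : (forall a b : 'I_n, a != b -> sep s a b) ->
  fully_oriented (OX sigma s).
Proof.
move=> H; apply/forallP => a; apply/forallP => b; apply/implyP => nab.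
have ns : sigma a != sigma b by apply: contra nab => /eqP/perm_inj ->.
case: (ltngtP (sigma a) (sigma b)) => [lt|gt|eq].
- by rewrite sep_OX // H.
- by rewrite orbC sep_OX // H // eq_sym.
- by move: ns; rewrite (val_inj eq) eqxx.
Qed.
End OX.


Section Adv.
Variable n : nat.
Variable alg : {set 'I_n * 'I_n} -> {set 'I_n}.

Definition Yk (f : 'I_n -> nat) : {set 'I_n * 'I_n} := [set p | (f p.1 < f p.2)%N].

Fixpoint key (t : nat) : 'I_n -> nat :=
  match t with
  | 0 => fun _ => 0%N
  | t'.+1 => fun v => ((key t' v).*2 + (v \in alg (Yk (key t'))))%N
  end.

Definition Ilist t := [seq alg (Yk (key i)) | i <- iota 0 t].

Lemma Ilist_S t : Ilist t.+1 = rcons (Ilist t) (alg (Yk (key t))).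
Proof. by rewrite /Ilist -addn1 iotaD map_cat cats1. Qed.

Lemma dbl_eq (x y : nat) (a b : bool) :
  ((x.*2 + a == y.*2 + b) = (x == y) && (a == b))%N.
Proof.
case: a; case: b => /=; rewrite ?andbT ?andbF.
all: try (apply/idP/idP; move/eqP; lia).
all: apply/negbTE/eqP; lia.
Qed.

Lemma key_eq t u v : (key t u == key t v) = ~~ sep (Ilist t) u v.
Proof.
elim: t => [|t IH]; first by rewrite eqxx /Ilist /sep.
rewrite Ilist_S sep_rcons /= dbl_eq IH negb_or; congr (_ && _).
by case: (u \in _); case: (v \in _).
Qed.

Lemma key_lt t u v : (key t u < key t v)%N -> (key t.+1 u < key t.+1 v)%N.
Proof. move=> /= H; case: (u \in _); case: (v \in _) => /=; lia. Qed.

Lemma key_lt_le t t' u v : (t <= t')%N -> (key t u < key t v)%N -> (key t' u < key t' v)%N.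
Proof.
move=> /subnK <-; elim: (t' - t)%N => [|d IH] H //=.
by apply: (key_lt (t := (d + t)%N)); apply: IH.
Qed.

Lemma key_eqS t u v : key t.+1 u = key t.+1 v -> key t u = key t v.
Proof. move=> /= /eqP; rewrite dbl_eq => /andP[/eqP] //. Qed.

Definition Eset t : {set 'I_n * 'I_n} := [set p | key t p.1 == key t p.2].

Lemma Eset_sub t t' : (t <= t')%N -> Eset t' \subset Eset t.
Proof.
move=> /subnK <-; elim: (t' - t)%N => [|d IH] //=.
apply: subset_trans IH; apply/subsetP => p; rewrite !inE => /eqP E.
by rewrite (@key_eqS (d + t)%N _ _ E).
Qed.

Lemma stab : exists T0, forall t, (T0 <= t)%N -> Eset t = Eset T0.
Proof.
suff H : forall N t, (#|Eset t| <= N)%N -> exists T0, forall t', (T0 <= t')%N -> Eset t' = Eset T0.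
  exact: (H _ 0%N (leqnn _)).
elim=> [|N IH] t Hc.
  exists t => t' Htt'; apply/eqP; rewrite eqEcard Eset_sub //.
  by rewrite (leq_trans Hc).
case: (classic (forall t', (t <= t')%N -> Eset t' = Eset t)) => [H|H]; first by exists t.
case: (not_all_ex_not _ _ H) => t' H'.
have [Ht Hne] : (t <= t')%N /\ Eset t' <> Eset t.
  split; last by move=> E; apply: H' => _.
  case: (boolP (t <= t')%N) => // Hb; exfalso; apply: H' => Hle.
  by rewrite Hle in Hb.
apply: (IH t'); rewrite -ltnS (leq_trans _ Hc) //.
apply: proper_card; rewrite properEneq Eset_sub // andbT; apply/eqP => E; exact: Hne.
Qed.

Lemma OX_Yk sigma t : (forall u v, (key t u < key t v)%N -> before sigma u v) ->
  OX sigma (Ilist t) = Yk (key t).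
Proof.
move=> C; apply/setP => -[a b]; rewrite !inE /=; apply/idP/idP.
  move=> /andP[Bab /existsP[c /and3P[H1 H2 H3]]].
  have Hca : key t a != key t c by rewrite key_eq H3.
  case: (ltngtP (key t a) (key t b)) => // [Hba|Hab].
    by move: (C _ _ Hba); rewrite /before ltnNge ltnW.
  case: (ltngtP (key t c) (key t a)) => [Hc|Hc|Hc].
  - by move: (C _ _ Hc); rewrite /before ltnNge H1.
  - rewrite Hab in Hc; by move: (C _ _ Hc); rewrite /before ltnNge H2.
  - by rewrite Hc eqxx in Hca.
move=> H; rewrite C //=; apply/existsP; exists b.
have Hs : sep (Ilist t) a b by rewrite -[sep _ _ _]negbK -key_eq neq_ltn H.
rewrite leqnn Hs !andbT ltnW //; exact: C.
Qed.
End Adv.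


Section Adv2.
Variable n : nat.
Hypothesis n0 : (0 < n)%N.
Variable alg : {set 'I_n * 'I_n} -> {set 'I_n}.

Lemma mix_lt (a b u v N : nat) : (a < b)%N -> (u < N)%N -> (a * N + u < b * N + v)%N.
Proof.
move=> Hab Hu.
have H1 : (a.+1 * N <= b * N)%N by rewrite leq_mul2r Hab orbT.
rewrite mulSn in H1; move: H1 Hu; move: (a * N)%N (b * N)%N => x y; lia.
Qed.

Lemma exists_compat : exists sigma : {perm 'I_n},
  forall t u v, (key alg t u < key alg t v)%N -> before sigma u v.
Proof.
case: (stab alg) => T0 HT0.
pose K v := (key alg T0 v * n + v)%N.
pose rank v := #|[set w | (K w < K v)%N]|.
have rank_lt : forall v, (rank v < n)%N.
  move=> v; rewrite -[X in (_ < X)%N]card_ord -(cardsC [set w | (K w < K v)%N]) -addn1 leq_add2l.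
  by apply/card_gt0P; exists v; rewrite !inE ltnn.
have Krank : forall u v, (K u < K v)%N -> (rank u < rank v)%N.
  move=> u v H; apply: proper_card; apply/properP; split.
    by apply/subsetP => w; rewrite !inE => /ltn_trans; apply.
  by exists u; rewrite !inE ?H ?ltnn.
have Kinj : injective K.
  move=> u v E; apply: val_inj.
  have : ((K u) %% n = (K v) %% n)%N by rewrite E.
  by rewrite /K !modnMDl !modn_small.
pose f v := Ordinal (rank_lt v).
have finj : injective f.
  move=> u v /(congr1 val) /= E; apply/eqP; apply/negPn/negP => Hne.
  have HK : K u != K v by apply: contra Hne => /eqP /Kinj ->.
  case: (ltngtP (K u) (K v)) => H.
  - by move: (Krank _ _ H); rewrite E ltnn.
  - by move: (Krank _ _ H); rewrite E ltnn.
  - by rewrite H eqxx in HK.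
exists (perm finj) => t u v Hk; rewrite /before !permE /=.
apply: Krank; rewrite /K.
have Hlt : (key alg T0 u < key alg T0 v)%N.
  case: (leqP t T0) => Ht; first exact: key_lt_le Hk.
  have Hne : key alg T0 u != key alg T0 v.
    apply/negP => /eqP E.
    have : (u, v) \in Eset alg t by rewrite (HT0 t (ltnW Ht)) inE E.
    by rewrite inE => /eqP E'; rewrite E' ltnn in Hk.
  case: (ltngtP (key alg T0 u) (key alg T0 v)) => // H.
    by move: (key_lt_le (ltnW Ht) H); rewrite ltnNge ltnW.
  by rewrite H eqxx in Hne.
exact: mix_lt Hlt (ltn_ord u).
Qed.

Lemma adaptive_run sigma :
  (forall t u v, (key alg t u < key alg t v)%N -> before sigma u v) ->
  forall m, adaptive_used alg sigma m = Ilist alg m /\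
            adaptive_state alg sigma m = Yk (key alg m).
Proof.
move=> C; elim=> [|m [IH1 IH2]].
  by split => //=; apply/setP => p; rewrite !inE ltnn.
have E1 : adaptive_used alg sigma m.+1 = Ilist alg m.+1 by rewrite used_S Ilist_S IH1 IH2.
split => //; rewrite adaptive_OX // E1 OX_Yk //; exact: C.
Qed.

Lemma adaptive_sep : exists sigma : {perm 'I_n}, forall m,
  fully_oriented (adaptive_state alg sigma m) ->
  forall a b : 'I_n, a != b -> sep (adaptive_used alg sigma m) a b.
Proof.
case: exists_compat => sigma C; exists sigma => m.
case: (adaptive_run C m) => -> -> /forallP F a b nab.
move: (F a) => /forallP /(_ b); rewrite nab /= !inE /= => Hk.
rewrite -[sep _ _ _]negbK -key_eq; apply/negP => /eqP E.
by move: Hk; rewrite E ltnn.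
Qed.
End Adv2.


Section Reals4.
Local Open Scope R_scope.

Definition Lx (x : R) : R := x * ln x.
Definition psi (t N : R) : R := Lx N - Lx t - Lx (N - t).

Lemma Lx0 : Lx 0 = 0.
Proof. unfold Lx; ring. Qed.
Lemma Lx1 : Lx 1 = 0.
Proof. unfold Lx; rewrite ln_1; ring. Qed.

Lemma ln_le_sub1 x : 0 < x -> ln x <= x - 1.
Proof. move=> Hx; have := exp_ineq1_le (ln x); rewrite exp_ln //; lra. Qed.

Lemma ln_le x y : 0 < x -> x <= y -> ln x <= ln y.
Proof.
move=> Hx /Rle_lt_or_eq_dec [H|->]; last by apply: Rle_refl.
by apply: Rlt_le; apply: ln_increasing.
Qed.

Lemma gibbs x r c N : 0 < x -> 0 < r -> 0 < c -> 0 < N ->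
  x - r * c / N <= x * (ln x + ln N - ln r - ln c).
Proof.
move=> Hx Hr Hc HN.
have Hxn : 0 < x * N by apply: Rmult_lt_0_compat.
have Hrc : 0 < r * c by apply: Rmult_lt_0_compat.
have Hz : 0 < (r * c) * / (x * N) by apply: Rmult_lt_0_compat => //; apply: Rinv_0_lt_compat.
have H := ln_le_sub1 Hz.
rewrite ln_mult // ?ln_Rinv // ?ln_mult // in H; try by apply: Rinv_0_lt_compat.
have H2 := Rmult_le_compat_l x _ _ (Rlt_le _ _ Hx) H.
have E : x * (r * c * / (x * N) - 1) = r * c / N - x by field; lra.
lra.
Qed.

Lemma term_bound x r c N : 0 <= x -> x <= r -> x <= c -> 0 < N ->
  x - r * c / N <= x * (ln x + ln N - ln r - ln c).
Proof.
move=> Hx Hr Hc HN; case: (Rle_lt_or_eq_dec _ _ Hx) => [Hx'|<-].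
  by apply: gibbs => //; lra.
have : 0 <= r * c / N.
  apply: Rmult_le_pos; first by apply: Rmult_le_pos; lra.
  by apply: Rlt_le; apply: Rinv_0_lt_compat.
lra.
Qed.

Lemma two_by_two a b c d : 0 <= a -> 0 <= b -> 0 <= c -> 0 <= d ->
  Lx (a + c) + Lx (b + d) + Lx (a + b) + Lx (c + d) <=
  Lx (a + b + c + d) + Lx a + Lx b + Lx c + Lx d.
Proof.
move=> Ha Hb Hc Hd.
case: (Rle_lt_or_eq_dec 0 (a + b + c + d)) => [|HN|HN]; first lra.
  have h1 := term_bound (r := a + c) (c := a + b) Ha ltac:(lra) ltac:(lra) HN.
  have h2 := term_bound (r := a + c) (c := c + d) Hc ltac:(lra) ltac:(lra) HN.
  have h3 := term_bound (r := b + d) (c := a + b) Hb ltac:(lra) ltac:(lra) HN.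
  have h4 := term_bound (r := b + d) (c := c + d) Hd ltac:(lra) ltac:(lra) HN.
  have Z : (a - (a + c) * (a + b) / (a + b + c + d)) + (c - (a + c) * (c + d) / (a + b + c + d))
         + (b - (b + d) * (a + b) / (a + b + c + d)) + (d - (b + d) * (c + d) / (a + b + c + d)) = 0.
    by field; lra.
  have I : a * (ln a + ln (a + b + c + d) - ln (a + c) - ln (a + b))
         + c * (ln c + ln (a + b + c + d) - ln (a + c) - ln (c + d))
         + b * (ln b + ln (a + b + c + d) - ln (b + d) - ln (a + b))
         + d * (ln d + ln (a + b + c + d) - ln (b + d) - ln (c + d))
         = (Lx (a + b + c + d) + Lx a + Lx b + Lx c + Lx d)
           - (Lx (a + c) + Lx (b + d) + Lx (a + b) + Lx (c + d)).
    by rewrite /Lx; ring.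
  lra.
have E : a = 0 /\ b = 0 /\ c = 0 /\ d = 0 by lra.
case: E => -> [-> [-> ->]]; rewrite !Rplus_0_l Lx0; lra.
Qed.

Lemma psi_super x X y Y : 0 <= x -> x <= X -> 0 <= y -> y <= Y ->
  psi x X + psi y Y <= psi (x + y) (X + Y).
Proof.
move=> H1 H2 H3 H4.
have H := two_by_two (a := x) (b := y) (c := X - x) (d := Y - y) H1 H3 ltac:(lra) ltac:(lra).
replace (x + (X - x)) with X in H by ring.
replace (y + (Y - y)) with Y in H by ring.
replace (X - x + (Y - y)) with (X + Y - (x + y)) in H by ring.
replace (x + y + (X - x) + (Y - y)) with (X + Y) in H by ring.
rewrite /psi; lra.
Qed.

Lemma psi_bound t k N : 0 <= t -> t <= k -> k <= N -> 0 < k ->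
  psi t N <= k * (1 + ln N - ln k).
Proof.
move=> Ht Htk HkN Hk.
have lnkN : ln k <= ln N by apply: ln_le.
have Hpos : 0 <= k * (1 + ln N - ln k) by apply: Rmult_le_pos; lra.
case: (Rle_lt_or_eq_dec _ _ Ht) => [Ht'|<-]; last first.
  have E : psi 0 N = 0 by unfold psi, Lx; replace (N - 0) with N by ring; ring.
  lra.
case: (Rle_lt_or_eq_dec t N ltac:(lra)) => [HtN|EtN]; last first.
  subst N.
  have E : psi t t = 0 by unfold psi, Lx; ring.
  lra.
have HN : 0 < N by lra.
have A1 : (N - t) * (ln N - ln (N - t)) <= t.
  have Hq : 0 < N * / (N - t) by apply: Rmult_lt_0_compat => //; apply: Rinv_0_lt_compat; lra.
  have H := ln_le_sub1 Hq; rewrite ln_mult ?ln_Rinv // in H; try lra; try by apply: Rinv_0_lt_compat; lra.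
  have H2 := Rmult_le_compat_l (N - t) _ _ ltac:(lra) H.
  have E : (N - t) * (N * / (N - t) - 1) = t by field; lra.
  lra.
have A2 : t * (ln k - ln t) <= k - t.
  have Hq : 0 < k * / t by apply: Rmult_lt_0_compat => //; apply: Rinv_0_lt_compat.
  have H := ln_le_sub1 Hq; rewrite ln_mult ?ln_Rinv // in H; try lra; try by apply: Rinv_0_lt_compat.
  have H2 := Rmult_le_compat_l t _ _ ltac:(lra) H.
  have E : t * (k * / t - 1) = k - t by field; lra.
  lra.
have A3 : (k - t) * ln k <= (k - t) * ln N by apply: Rmult_le_compat_l; lra.
rewrite /psi /Lx; lra.
Qed.

End Reals4.


Definition sumR (T : Type) (f : T -> R) (s : seq T) : R :=
  foldr (fun x acc => Rplus (f x) acc) 0%R s.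

Lemma sumR_add_le (T : Type) (f g h : T -> R) s :
  (forall x, (f x + g x <= h x)%R) -> (sumR f s + sumR g s <= sumR h s)%R.
Proof.
move=> H; elim: s => [|x s IH]; first by rewrite /=; lra.
change (sumR f (x :: s)) with (f x + sumR f s)%R.
change (sumR g (x :: s)) with (g x + sumR g s)%R.
change (sumR h (x :: s)) with (h x + sumR h s)%R.
have := H x; lra.
Qed.

Lemma sumR_le_const (T : eqType) (f : T -> R) c s :
  (forall x, x \in s -> (f x <= c)%R) -> (sumR f s <= INR (size s) * c)%R.
Proof.
elim: s => [|x s IH] H; first by rewrite /=; lra.
change (sumR f (x :: s)) with (f x + sumR f s)%R.
change (INR (size (x :: s))) with (INR (size s).+1); rewrite S_INR Rmult_plus_distr_r Rmult_1_l; have := H x (mem_head _ _).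
have := IH (fun y Hy => H y (mem_behead (s := x :: s) Hy)).
move=> h1 h2. lra.
Qed.

Section Ent.
Variable n : nat.

Lemma entropy (u : seq {set 'I_n}) (V : {set 'I_n}) :
  (forall a b, a \in V -> b \in V -> a != b -> sep u a b) ->
  (Lx (INR #|V|) <= sumR (fun I : {set 'I_n} => psi (INR #|I :&: V|) (INR #|V|)) u)%R.
Proof.
elim: u V => [|I u IH] V H /=.
  have : (#|V| <= 1)%N.
    apply/card_le1_eqP => a b Ha Hb; apply/eqP; apply/negPn/negP => nab.
    by move: (H b a Hb Ha nab); rewrite /sep.
  case: #|V| => [|[|//]] _; rewrite ?Lx0 ?Lx1; lra.
set A := V :&: I; set B := V :\: I.
have HA : forall a b, a \in A -> b \in A -> a != b -> sep u a b.
  move=> a b; rewrite !inE => /andP[Ha Ia] /andP[Hb Ib] nab.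
  by move: (H a b Ha Hb nab); rewrite /sep /= Ia Ib.
have HB : forall a b, a \in B -> b \in B -> a != b -> sep u a b.
  move=> a b; rewrite !inE => /andP[Ia Ha] /andP[Ib Hb] nab.
  by move: (H a b Ha Hb nab); rewrite /sep /= (negbTE Ia) (negbTE Ib).
have IA := IH A HA; have IB := IH B HB.
have cV : #|V| = (#|A| + #|B|)%N by rewrite cardsID.
have cJ : forall J : {set 'I_n}, #|J :&: V| = (#|J :&: A| + #|J :&: B|)%N.
  by move=> J; rewrite /A /B setIA setIDA cardsID.
have S := sumR_add_le u (f := fun J : {set 'I_n} => psi (INR #|J :&: A|) (INR #|A|))
   (g := fun J : {set 'I_n} => psi (INR #|J :&: B|) (INR #|B|))
   (h := fun J : {set 'I_n} => psi (INR #|J :&: V|) (INR #|V|)).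
have S' : (sumR (fun J : {set 'I_n} => psi (INR #|J :&: A|) (INR #|A|)) u +
           sumR (fun J : {set 'I_n} => psi (INR #|J :&: B|) (INR #|B|)) u <=
           sumR (fun J : {set 'I_n} => psi (INR #|J :&: V|) (INR #|V|)) u)%R.
  apply: S => J; rewrite cJ cV !plus_INR; apply: psi_super; try exact: pos_INR;
  by apply: le_INR; apply/leP; apply: subset_leq_card; apply: subsetIr.
have EI : #|I :&: V| = #|A| by rewrite setIC.
have Epsi : psi (INR #|I :&: V|) (INR #|V|) = (Lx (INR #|V|) - Lx (INR #|A|) - Lx (INR #|B|))%R.
  rewrite /psi EI; congr (_ - _ - Lx _)%R; rewrite cV plus_INR; ring.
rewrite Epsi; clearbody A B.
apply: (Rle_trans _ (Lx (INR #|V|) - Lx (INR #|A|) - Lx (INR #|B|) +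
   (sumR (fun J : {set 'I_n} => psi (INR #|J :&: A|) (INR #|A|)) u +
    sumR (fun J : {set 'I_n} => psi (INR #|J :&: B|) (INR #|B|)) u))%R).
  set a1 := Lx (INR #|A|); set b1 := Lx (INR #|B|).
  set sA := sumR (fun J : {set 'I_n} => psi (INR #|J :&: A|) (INR #|A|)) u.
  set sB := sumR (fun J : {set 'I_n} => psi (INR #|J :&: B|) (INR #|B|)) u.
  have IA' : (a1 <= sA)%R := IA. have IB' : (b1 <= sB)%R := IB. have Ex : forall x, (x <= x - a1 - b1 + (sA + sB))%R by move=> x; lra. apply: Ex.
apply: Rplus_le_compat_l; exact: S'.
Qed.
End Ent.

Lemma count_bound (n k : nat) (s : seq {set 'I_n}) : (0 < k)%N -> (k <= n)%N ->
  (forall I, I \in s -> (#|I| <= k)%N) ->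
  (forall a b : 'I_n, a != b -> sep s a b) ->
  Rle (lower_bound n k) (INR (size (undup s))).
Proof.
move=> k0 kn Hs Hsep.
set u := undup s.
have Hu : forall a b, a \in [set: 'I_n] -> b \in [set: 'I_n] -> a != b -> sep u a b.
  by move=> a b _ _ nab; rewrite /sep has_undup; apply: Hsep.
have E := entropy Hu.
rewrite cardsT card_ord in E.
have Kp : (0 < INR k)%R by apply: lt_0_INR; apply/ltP.
have KN : (INR k <= INR n)%R by apply: le_INR; apply/leP.
have B := sumR_le_const (f := fun I : {set 'I_n} => psi (INR #|I :&: [set: 'I_n]|) (INR n))
   (c := (INR k * (1 + ln (INR n) - ln (INR k)))%R) (s := u).
have B' : (sumR (fun I : {set 'I_n} => psi (INR #|I :&: [set: 'I_n]|) (INR n)) u <=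
   INR (size u) * (INR k * (1 + ln (INR n) - ln (INR k))))%R.
  apply: B => I HI; rewrite setIT; apply: psi_bound => //; first exact: pos_INR.
  by apply: le_INR; apply/leP; apply: Hs; rewrite -mem_undup.
have lnkN : (ln (INR k) <= ln (INR n))%R by apply: ln_le.
have D : ln (INR n * exp 1 / INR k) = (1 + ln (INR n) - ln (INR k))%R.
  rewrite /Rdiv ln_mult ?ln_mult ?ln_Rinv ?ln_exp //; try lra; try apply: exp_pos.
    by apply: Rmult_lt_0_compat; [lra| apply: exp_pos].
  by apply: Rinv_0_lt_compat.
have Dp : (0 < 1 + ln (INR n) - ln (INR k))%R by lra.
rewrite /lower_bound D.
have Hm := Rle_trans _ _ _ E B'.
rewrite /Lx in Hm.
set m := INR (size u) in Hm *.
set D0 := (1 + ln (INR n) - ln (INR k))%R in Hm Dp *.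
have -> : (INR n / INR k * (ln (INR n) / D0) = (INR n * ln (INR n)) * / (INR k * D0))%R.
  by field; lra.
have P : (0 < INR k * D0)%R by apply: Rmult_lt_0_compat.
apply: (Rmult_le_reg_r (INR k * D0)) => //.
rewrite Rmult_assoc Rinv_l; lra.
Qed.


Lemma adj_perm n (a b : 'I_n) : a != b ->
  exists sigma : {perm 'I_n}, (sigma a = 0 :> nat)%N /\ (sigma b = 1 :> nat)%N.
Proof.
move=> nab.
have n1 : (1 < n)%N.
  case: n a b nab => [[]//|[|n]] // [[|?]//] ? [[|?]//] ?.
have n0 : (0 < n)%N by apply: ltnW.
pose x0 := Ordinal n0; pose x1 := Ordinal n1.
pose p1 := tperm a x0; pose y := p1 b.
have yx0 : y != x0.
  by rewrite /y -(tpermL a x0) (inj_eq (@perm_inj _ p1)) eq_sym.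
have x10 : x1 != x0 by [].
exists (p1 * tperm y x1)%g; rewrite !permM.
by rewrite tpermL tpermD // tpermL.
Qed.

Lemma sep_of_full n (s : seq {set 'I_n}) : (0 < n)%N ->
  (forall sigma : {perm 'I_n}, fully_oriented (nonadaptive_state sigma s)) ->
  forall a b : 'I_n, a != b -> sep s a b.
Proof.
move=> n0 H a b nab.
case: (adj_perm nab) => sigma [Ha Hb].
move: (H sigma); rewrite nonadaptive_OX // => /forallP /(_ a) /forallP /(_ b).
rewrite nab /= !inE /= /before Ha Hb /= orbF.
move=> /existsP [c /andP [Hc Hs]].
have : (sigma c = 0 :> nat)%N \/ (sigma c = 1 :> nat)%N.
  by move: Hc; case: (nat_of_ord (sigma c)) => [|[|]]; auto.
case=> E.
  have : c = a by apply: (@perm_inj _ sigma); apply: val_inj; rewrite /= E Ha.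
  by move=> Ec; rewrite Ec sep_refl in Hs.
have : c = b by apply: (@perm_inj _ sigma); apply: val_inj; rewrite /= E Hb.
by move=> Ec; rewrite Ec in Hs.
Qed.


Section UB.
Variables n k : nat.
Hypothesis hk : (0 < k)%N.
Hypothesis hkn : (k.*2 < n)%N.

Let b := ceil_div n k.

Lemma nbk : (n <= b * k)%N.
Proof.
rewrite /b /ceil_div.
have := divn_eq (n + k.-1) k; have := ltn_pmod (n + k.-1) hk.
move: ((n + k.-1) %/ k)%N ((n + k.-1) %% k)%N => q r; nia.
Qed.

Lemma b2 : (1 < b)%N.
Proof.
rewrite /b /ceil_div leq_divRL //; lia.
Qed.

Let b0 : (0 < b)%N := ltnW b2.

Lemma digit_diff L u v : (u < expn b L)%N -> (v < expn b L)%N -> u != v ->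
  exists2 i, (i < L)%N & (u %/ expn b i) %% b != (v %/ expn b i) %% b.
Proof.
elim: L u v => [|L IH] u v.
  by rewrite expn0 !ltnS !leqn0 => /eqP -> /eqP ->; rewrite eqxx.
move=> Hu Hv nuv.
case: (boolP (u %% b == v %% b)) => Hm; last by exists 0%N; rewrite // expn0 !divn1.
have nq : (u %/ b != v %/ b)%N.
  apply: contra nuv => /eqP E; apply/eqP.
  by rewrite (divn_eq u b) (divn_eq v b) E (eqP Hm).
have Hu' : (u %/ b < expn b L)%N by rewrite ltn_divLR // -expnSr.
have Hv' : (v %/ b < expn b L)%N by rewrite ltn_divLR // -expnSr.
case: (IH _ _ Hu' Hv' nq) => i Hi Hd; exists i.+1 => //.
by rewrite expnS !divnMA.
Qed.

Definition D (i v : nat) : nat :=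
  if i is 0 then (v %% b)%N else ((v %/ expn b i + v) %% b)%N.

Definition Sset (i d : nat) : {set 'I_n} := [set v : 'I_n | D i v == d].

Lemma card_S i d : (#|Sset i d| <= k)%N.
Proof.
have fk : forall v : 'I_n, (v %/ b < k)%N.
  by move=> v; rewrite ltn_divLR // mulnC; apply: leq_trans (ltn_ord v) nbk.
pose f (v : 'I_n) : 'I_k := Ordinal (fk v).
rewrite -(card_in_imset (f := f)); first by rewrite -[X in (_ <= X)%N]card_ord max_card.
move=> u v; rewrite !inE => /eqP Hu /eqP Hv /(congr1 val) /= Eq.
have Hm : (u %% b = v %% b)%N.
  case: i Hu Hv => [|i] /= Hu Hv; first by rewrite Hu Hv.
  have Ei : (u %/ expn b i.+1 = v %/ expn b i.+1)%N by rewrite expnS !divnMA Eq.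
  apply/eqP; rewrite -(eqn_modDl (u %/ expn b i.+1)); rewrite {2}Ei; apply/eqP.
  by rewrite Hu Hv.
apply: val_inj; rewrite /= (divn_eq u b) (divn_eq v b) Eq Hm.
by [].
Qed.

Let L := up_log b n.

Definition sU : seq {set 'I_n} := [seq Sset i d | i <- iota 0 L, d <- iota 1 b.-1].

Lemma size_sU : size sU = upper_bound n k.
Proof. by rewrite /sU size_allpairs !size_iota mulnC. Qed.

Lemma sep_sU (u v : 'I_n) : u != v -> sep sU u v.
Proof.
move=> nuv.
have HnL : (n <= expn b L)%N by apply: up_logP; exact: b2.
have [i Hi Hd] := digit_diff (leq_trans (ltn_ord u) HnL) (leq_trans (ltn_ord v) HnL) nuv.
have HD : exists i, (i < L)%N /\ D i u != D i v.
  case: (boolP (u %% b == v %% b)%N) => Hm; last first.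
    exists 0%N; split => //; rewrite /L up_log_gt0 b2 /=.
    case: n u v nuv {HnL Hi Hd Hm} => [[]//|[|m]] // [[|?]//] ? [[|?]//] ?.
  exists i; split => //.
  case: i Hi Hd => [|i] Hi Hd /=; first by rewrite !expn0 !divn1 Hm in Hd.
  apply: contra Hd => /eqP E.
  rewrite -(eqn_modDr u) E; apply/eqP.
  by rewrite -modnDmr -(eqP Hm) modnDmr.
case: HD => j [Hj HD].
have Dlt : forall w, (D j w < b)%N by case: j {Hj HD} => [|j] w /=; apply: ltn_pmod.
pose d := if D j u != 0%N then D j u else D j v.
have d0 : (0 < d)%N.
  rewrite /d; case: ifP => //; first by rewrite lt0n.
  by move/negbFE/eqP => E; rewrite lt0n -E eq_sym.
have Hmem : Sset j d \in sU.
  apply: (allpairs_f Sset); rewrite mem_iota //=.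
  rewrite add1n prednK ?(ltnW b2) // d0 /=; rewrite /d; case: ifP => _; apply: Dlt.
apply/hasP; exists (Sset j d) => //; rewrite !inE /d.
case: ifP => [H|/negbFE/eqP H].
  by rewrite eqxx [D j v == _]eq_sym (negbTE HD).
by rewrite eqxx (negbTE HD).
Qed.
End UB.

Theorem theorem3 (n k : nat) (hk : (0 < k)%N) (hkn : (k.*2 < n)%N) :
  (* lower bound, non-adaptive algorithms *)
  (forall s : seq {set 'I_n},
      (forall I, I \in s -> (#|I| <= k)%N) ->
      (forall sigma : {perm 'I_n}, fully_oriented (nonadaptive_state sigma s)) ->
      Rle (lower_bound n k) (INR (size (undup s)))) /\
  (* lower bound, adaptive deterministic algorithms *)
  (forall alg : {set 'I_n * 'I_n} -> {set 'I_n},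
      (forall (sigma : {perm 'I_n}) (i : nat), (#|alg (adaptive_state alg sigma i)| <= k)%N) ->
      (forall sigma : {perm 'I_n}, exists m, fully_oriented (adaptive_state alg sigma m)) ->
      exists sigma : {perm 'I_n}, forall m,
        fully_oriented (adaptive_state alg sigma m) ->
        Rle (lower_bound n k) (INR (size (undup (adaptive_used alg sigma m))))) /\
  (* upper bound *)
  (exists s : seq {set 'I_n},
      (forall I, I \in s -> (#|I| <= k)%N) /\
      (size s <= upper_bound n k)%N /\
      (forall sigma : {perm 'I_n}, fully_oriented (nonadaptive_state sigma s))).
Proof.
have n0 : (0 < n)%N by lia.
have kn : (k <= n)%N by lia.
split; [|split].
- move=> s Hs Hf; apply: count_bound => //; exact: sep_of_full.
- move=> alg Hs _; case: (adaptive_sep n0 alg) => sigma H; exists sigma => m Hf.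
  apply: count_bound => //; last exact: H.
  move=> I /mapP [i _ ->]; exact: Hs.
- exists (sU n k); split; [|split].
  + by move=> I /allpairsP [[i d] [_ _ ->]]; apply: card_S.
  + by rewrite size_sU.
  + move=> sigma; rewrite nonadaptive_OX //; apply: full_of_sep => a b nab.
    exact: sep_sU.
Qed.
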